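(* Let $R_1,R_2$ be discrete valuation domains with maximal ideals $P_1=R_1p_1$ and $P_2=R_2p_2$, let $\overline{R}$ be a field, $\mathcal{V}_i:R_i\to\overline{R}$ surjective ring homomorphisms with $\ker\mathcal{V}_i=P_i$, and $R=\{(r_1,r_2)\in R_1\times R_2:\mathcal{V}_1(r_1)=\mathcal{V}_2(r_2)\}$. Let $M$ be a non-separated $R$-module and let $0\to K\xrightarrow{i}S\xrightarrow{\varphi}M\to0$ be a separated representation of $M$. Then $M$ is a pseudo-absorbing primary multiplication $R$-module if and only if $S$ is a pseudo-absorbing primary multiplication $R$-module.
   Context: $R$ is local with maximal ideal $P=P_1\oplus P_2=\{(a,b):a\in P_1,b\in P_2\}$. For an $R$-module $S$, $P_1S$ means $(P_1\oplus 0)S$ with $P_1\oplus0=\{(a,0):a\in P_1\}$, and $P_2S$ means $(0\oplus P_2)S$ with $0\oplus P_2=\{(0,b):b\in P_2\}$. An $R$-module $S$ is separated if $P_1S\cap P_2S=0$. A separated representation of an $R$-module $M$ is a surjective $R$-homomorphism $\varphi:S\to M$ with $S$ separated such that whenever $\varphi$ factors as $S\xrightarrow{f}S'\to M$ with $S'$ a separated $R$-module, $f$ is injective; $K=\ker\varphi$ and $i$ is the inclusion. A proper ideal $I$ of a commutative ring is 2-absorbing primary if whenever $abc\in I$ then $ab\in I$ or $ac\in\sqrt I$ or $bc\in\sqrt I$. A proper submodule $N$ of an $R$-module $M$ is pseudo-absorbing primary if $(N:_RM)=\{r\in R:rM\subseteq N\}$ is a 2-absorbing primary ideal of $R$. $M$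 is a pseudo-absorbing primary multiplication module if for every pseudo-absorbing primary submodule $N$ of $M$ there is an ideal $I$ of $R$ with $N=IM$. *)

(* Defs.v *)
From HB Require Import structures.
From mathcomp Require Import all_boot all_order all_algebra.
Set Implicit Arguments. Unset Strict Implicit. Unset Printing Implicit Defensive.
Import Order.TTheory GRing.Theory.
Local Open Scope ring_scope.

Section Ideals.
Variable A : comNzRingType.

Definition is_ideal (I : A -> Prop) : Prop :=
  [/\ I 0, (forall x y, I x -> I y -> I (x + y)) & (forall r x, I x -> I (r * x))].

Definition proper_ideal (I : A -> Prop) : Prop := is_ideal I /\ ~ I 1.

Definition principal_ideal (a : A) : A -> Prop := fun x => exists r, x = r * a.

Definition rad (I : A -> Prop) : A -> Prop := fun x => exists n : nat, I (x ^+ n).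

Definition two_absorbing_primary (I : A -> Prop) : Prop :=
  proper_ideal I /\
  forall a b c, I (a * b * c) -> [\/ I (a * b), rad I (a * c) | rad I (b * c)].

Definition is_PID : Prop :=
  forall I : A -> Prop, is_ideal I -> exists a, forall x, I x <-> principal_ideal a x.

End Ideals.

Section Units.
Variable A : comUnitRingType.
Definition is_local : Prop :=
  forall x y : A, x \isn't a GRing.unit -> y \isn't a GRing.unit ->
    (x + y) \isn't a GRing.unit.

Definition not_field : Prop := exists x : A, x != 0 /\ x \isn't a GRing.unit.
End Units.

Definition is_DVR (A : idomainType) : Prop :=
  [/\ is_PID A, is_local A & not_field A].

Section Pullback.
Variables (R1 R2 : comNzRingType) (F : fieldType)
          (V1 : {rmorphism R1 -> F}) (V2 : {rmorphism R2 -> F}).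

Definition pb_pred : pred (R1 * R2)%type := fun x => V1 x.1 == V2 x.2.

Lemma pb_subring_closed : subring_closed pb_pred.
Proof.
split; rewrite /pb_pred /=.
- by apply/eqP; rewrite (rmorph1 V1) (rmorph1 V2).
- move=> [x1 x2] [y1 y2] /= /eqP Hx /eqP Hy.
  by apply/eqP; rewrite (rmorphB V1) (rmorphB V2) Hx Hy.
- move=> [x1 x2] [y1 y2] /= /eqP Hx /eqP Hy.
  by apply/eqP; rewrite (rmorphM V1) (rmorphM V2) Hx Hy.
Qed.

HB.instance Definition _ := GRing.isSubringClosed.Build _ pb_pred pb_subring_closed.

Record pullback := Pullback { pbval :> (R1 * R2)%type; pbvalP : pb_pred pbval }.

HB.instance Definition _ := [isSub for pbval].
HB.instance Definition _ := [Choice of pullback by <:].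
HB.instance Definition _ := [SubChoice_isSubComNzRing of pullback by <:].

End Pullback.

Section Modules.
Variables (R1 R2 : comNzRingType) (F : fieldType)
          (V1 : {rmorphism R1 -> F}) (V2 : {rmorphism R2 -> F}).
Local Notation R := (pullback V1 V2).

(* P1 (+) 0 = {(a,0) : a in P1} and 0 (+) P2 = {(0,b) : b in P2}, as subsets of R,
   where P_i = ker V_i. *)
Definition P1_0 : R -> Prop := fun x => (pbval x).2 = 0 /\ V1 (pbval x).1 = 0.
Definition O_P2 : R -> Prop := fun x => (pbval x).1 = 0 /\ V2 (pbval x).2 = 0.

Section OneModule.
Variable M : lmodType R.

Definition is_submodule (N : M -> Prop) : Prop :=
  [/\ N 0, (forall x y, N x -> N y -> N (x + y)) & (forall (r : R) x, N x -> N (r *: x))].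

Definition proper_submodule (N : M -> Prop) : Prop :=
  is_submodule N /\ exists m, ~ N m.

Definition ideal_mul (I : R -> Prop) : M -> Prop :=
  fun m => exists (n : nat) (r : 'I_n -> R) (x : 'I_n -> M),
    (forall k, I (r k)) /\ m = \sum_(k < n) r k *: x k.

Definition colon (N : M -> Prop) : R -> Prop := fun r => forall m, N (r *: m).

Definition separated : Prop :=
  forall m, ideal_mul P1_0 m -> ideal_mul O_P2 m -> m = 0.

Definition pseudo_absorbing_primary (N : M -> Prop) : Prop :=
  proper_submodule N /\ two_absorbing_primary (colon N).

Definition pap_multiplication : Prop :=
  forall N : M -> Prop, pseudo_absorbing_primary N ->
    exists I : R -> Prop, is_ideal I /\ forall m, N m <-> ideal_mul I m.

End OneModule.

Definition separated_representation (S M : lmodType R) (phi : {linear S -> M}) : Prop :=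
  [/\ separated S,
      (forall m : M, exists s : S, phi s = m) &
      forall (S' : lmodType R) (f : {linear S -> S'}) (g : {linear S' -> M}),
        separated S' -> (forall s, phi s = g (f s)) -> injective f].

End Modules.

(* Main.v *)
Require Import Defs.
From HB Require Import structures.
From mathcomp Require Import all_boot all_order all_algebra.
From mathcomp Require Import ring.
From Stdlib Require Import Classical ClassicalEpsilon FunctionalExtensionality PropExtensionality.
Import GRing.Theory.
Local Open Scope ring_scope.
Set Implicit Arguments. Unset Strict Implicit. Unset Printing Implicit Defensive.

Section DVR.
Variables (A : idomainType) (p : A).
Hypotheses (hPID : is_PID A)
  (hP : forall x : A, x \isn't a GRing.unit <-> principal_ideal p x)
  (hnf : not_field A).

Lemma p_nonunit : p \isn't a GRing.unit.
Proof. by apply/(proj2 (hP p)); exists 1; rewrite mul1r. Qed.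

Lemma p_neq0 : p != 0.
Proof.
case: hnf => x [xn0 /hP [r xr]]; apply/negP => /eqP p0.
by move: xn0; rewrite xr p0 mulr0 eqxx.
Qed.

Lemma krull (x : A) : x != 0 -> exists N, ~ principal_ideal (p ^+ N.+1) x.
Proof.
move=> xn0; apply: NNPP => H.
have H' : forall N, principal_ideal (p ^+ N.+1) x.
  by move=> N; apply: NNPP => h; apply: H; exists N.
pose J := fun z : A => exists n t, z * p ^+ n = t * x.
have hJ : is_ideal J.
  split.
  - by exists 0%N, 0; rewrite !mul0r.
  - move=> z1 z2 [n1 [t1 h1]] [n2 [t2 h2]]; exists (n1 + n2)%N, (t1 * p ^+ n2 + t2 * p ^+ n1).
    rewrite exprD.
    have -> : (z1 + z2) * (p ^+ n1 * p ^+ n2) = (z1 * p ^+ n1) * p ^+ n2 + (z2 * p ^+ n2) * p ^+ n1 by ring.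
    rewrite h1 h2; ring.
  - move=> r z [n [t h]]; exists n, (r * t).
    by have := congr1 (fun v => r * v) h; rewrite /= !mulrA.
have [a ha] := hPID hJ.
have Jx : J x by exists 0%N, 1; rewrite expr0 mulr1 mul1r.
have an0 : a != 0.
  apply/negP => /eqP a0; have [r xr] := (proj1 (ha x) Jx).
  by move: xn0; rewrite xr a0 mulr0 eqxx.
have Ja : J a by apply/ha; exists 1; rewrite mul1r.
case: Ja => n [t ht].
have [w hw] := H' n.
have Jw : J w by exists n.+1, 1; rewrite mul1r hw.
have [s hs] := (proj1 (ha w) Jw).
have e : (a * p ^+ n) * (1 - p * (t * s)) = 0.
  have -> : (a * p ^+ n) * (1 - p * (t * s)) = a * p ^+ n - t * ((s * a) * p ^+ n.+1) by rewrite exprS; ring.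
  by rewrite -hs -hw -ht subrr.
move: e => /eqP; rewrite mulf_eq0 mulf_eq0 expf_eq0 (negbTE an0) (negbTE p_neq0) andbF /= subr_eq0.
move=> /eqP e; move: p_nonunit => /negP; apply; apply/unitrPr; exists (t * s); by rewrite -e.
Qed.

Lemma val_form (x : A) : x != 0 -> exists k u, u \is a GRing.unit /\ x = u * p ^+ k.
Proof.
move=> xn0; have [N hN] := krull xn0.
elim: N hN => [|N IH] hN.
  exists 0%N, x; split; last by rewrite expr0 mulr1.
  apply/negPn/negP => hu; apply: hN; have [r ->] := proj1 (hP x) hu.
  by exists r; rewrite expr1.
case: (classic (principal_ideal (p ^+ N.+1) x)) => [[u hu]|h]; last exact: IH.
exists N.+1, u; split => //.
apply/negPn/negP => hn; apply: hN; have [v hv] := proj1 (hP u) hn.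
by exists v; rewrite hu hv [in RHS]exprS mulrA.
Qed.

Lemma dvr_pow (x y : A) : x != 0 -> y \isn't a GRing.unit -> exists n t, y ^+ n = t * x.
Proof.
move=> xn0 /hP [z ->]; have [k [u [hu ->]]] := val_form xn0.
exists k, (z ^+ k * u^-1).
by rewrite exprMn -mulrA (mulrA u^-1) mulVr // mul1r.
Qed.
End DVR.



Section QuotSec.
Variables (R : pzRingType) (V : lmodType R) (L : V -> Prop).
Hypothesis hL : [/\ L 0, (forall x y, L x -> L y -> L (x + y)) &
  (forall (r : R) x, L x -> L (r *: x))].
Let L0 : L 0 := let: And3 a _ _ := hL in a.
Let LD : forall x y, L x -> L y -> L (x + y) := let: And3 _ a _ := hL in a.
Let LZ : forall (r : R) x, L x -> L (r *: x) := let: And3 _ _ a := hL in a.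

Lemma LN x : L x -> L (- x).
Proof. by move=> h; rewrite -scaleN1r; apply: LZ. Qed.
Lemma LB x y : L x -> L y -> L (x - y).
Proof. by move=> hx hy; apply: LD => //; apply: LN. Qed.

Definition qcls (x : V) : V -> Prop := fun y => L (x - y).
Definition qrep (x : V) : V := epsilon (inhabits 0) (qcls x).

Lemma qrep_spec x : L (x - qrep x).
Proof.
have hx : qcls x x by rewrite /qcls subrr.
exact: (@epsilon_spec V (inhabits 0) (qcls x) (ex_intro _ x hx)).
Qed.

Lemma qrep_eq x y : L (x - y) -> qrep x = qrep y.
Proof.
move=> h; rewrite /qrep; congr (epsilon _ _).
apply: functional_extensionality => z; apply: propositional_extensionality.
rewrite /qcls; split => hz.
- have -> : y - z = (x - z) - (x - y) by rewrite [in RHS]opprB [in RHS]addrC [in RHS]addrA subrK.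
  by apply: LB.
- have -> : x - z = (x - y) + (y - z) by rewrite [in RHS]addrA subrK.
  by apply: LD.
Qed.

Lemma qrep_rep x : qrep (qrep x) = qrep x.
Proof. apply: qrep_eq. by rewrite -opprB; apply: LN; apply: qrep_spec. Qed.

Definition QT : Type := let _ := hL in {x : V | qrep x == x}.
HB.instance Definition _ := Choice.on QT.

Definition qpi (x : V) : QT := exist _ (qrep x) (introT eqP (qrep_rep x)).

Lemma qpiK (q : QT) : qpi (sval q) = q.
Proof. case: q => x hx; apply: val_inj => /=; exact/eqP. Qed.

Lemma qpi_eq x y : qpi x = qpi y <-> L (x - y).
Proof.
split; last by move=> h; apply: val_inj => /=; apply: qrep_eq.
move=> /(congr1 sval) /= e.
have -> : x - y = (x - qrep x) - (y - qrep y) by rewrite e opprB addrA subrK. 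
by apply: LB; apply: qrep_spec.
Qed.

Lemma qpi_rep x : qpi (qrep x) = qpi x.
Proof. by apply/qpi_eq; rewrite -opprB; apply: LN; apply: qrep_spec. Qed.

Definition qzero : QT := qpi 0.
Definition qadd (a b : QT) : QT := qpi (sval a + sval b).
Definition qopp (a : QT) : QT := qpi (- sval a).
Definition qscale (r : R) (a : QT) : QT := qpi (r *: sval a).

Lemma qaddE x y : qadd (qpi x) (qpi y) = qpi (x + y).
Proof.
apply/qpi_eq => /=.
have -> : qrep x + qrep y - (x + y) = - ((x - qrep x) + (y - qrep y)).
  by rewrite !opprD !opprK addrACA [- x + _]addrC [- y + _]addrC.
by apply: LN; apply: LD; apply: qrep_spec.
Qed.
Lemma qoppE x : qopp (qpi x) = qpi (- x).
Proof.
apply/qpi_eq => /=.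
have -> : - qrep x - - x = x - qrep x by rewrite opprK addrC.
exact: qrep_spec.
Qed.
Lemma qscaleE r x : qscale r (qpi x) = qpi (r *: x).
Proof.
apply/qpi_eq => /=.
have -> : r *: qrep x - r *: x = r *: (- (x - qrep x)) by rewrite opprB scalerBr.
by apply: LZ; apply: LN; apply: qrep_spec.
Qed.

Lemma qind (P : QT -> Prop) : (forall x, P (qpi x)) -> forall q, P q.
Proof. by move=> h q; rewrite -(qpiK q). Qed.

Lemma qaddA : associative qadd.
Proof. by elim/qind => x; elim/qind => y; elim/qind => z; rewrite !qaddE addrA. Qed.
Lemma qaddC : commutative qadd.
Proof. by elim/qind => x; elim/qind => y; rewrite !qaddE addrC. Qed.
Lemma qadd0 : left_id qzero qadd.
Proof. by elim/qind => x; rewrite /qzero qaddE add0r. Qed.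
Lemma qaddN : left_inverse qzero qopp qadd.
Proof. by elim/qind => x; rewrite qoppE qaddE addNr. Qed.

HB.instance Definition _ := GRing.isZmodule.Build QT qaddA qaddC qadd0 qaddN.

Lemma qscaleA a b v : qscale a (qscale b v) = qscale (a * b) v.
Proof. by elim/qind: v => x; rewrite !qscaleE scalerA. Qed.
Lemma qscale1 : left_id 1 qscale.
Proof. by elim/qind => x; rewrite qscaleE scale1r. Qed.
Lemma qscaleDr : right_distributive qscale +%R.
Proof. move=> a; elim/qind => x; elim/qind => y.
change (qscale a (qadd (qpi x) (qpi y)) = qadd (qscale a (qpi x)) (qscale a (qpi y))).
by rewrite [qscale a (qpi x)]qscaleE [qscale a (qpi y)]qscaleE !qaddE qscaleE scalerDr. Qed.
Lemma qscaleDl v : {morph qscale^~ v: a b / a + b}.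
Proof. elim/qind: v => x a b.
change (qscale (a + b) (qpi x) = qadd (qscale a (qpi x)) (qscale b (qpi x))).
by rewrite [qscale a _]qscaleE [qscale b _]qscaleE qaddE qscaleE scalerDl. Qed.

HB.instance Definition _ := GRing.Zmodule_isLmodule.Build R QT qscaleA qscale1 qscaleDr qscaleDl.

Lemma qpi_linear : linear qpi.
Proof. move=> a x y.
change (qpi (a *: x + y) = qadd (qscale a (qpi x)) (qpi y)).
by rewrite [qscale a _]qscaleE qaddE. Qed.

HB.instance Definition _ := GRing.isLinear.Build R V QT *:%R qpi qpi_linear.

End QuotSec.



Section Ring.
Variables (R1 R2 : idomainType) (F : fieldType) (p1 : R1) (p2 : R2)
  (V1 : {rmorphism R1 -> F}) (V2 : {rmorphism R2 -> F}).
Hypotheses (hR1 : is_DVR R1) (hR2 : is_DVR R2)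
  (hP1 : forall x : R1, x \isn't a GRing.unit <-> principal_ideal p1 x)
  (hP2 : forall x : R2, x \isn't a GRing.unit <-> principal_ideal p2 x)
  (hV1surj : forall c : F, exists r : R1, V1 r = c)
  (hV2surj : forall c : F, exists r : R2, V2 r = c)
  (hV1ker : forall x : R1, V1 x = 0 <-> principal_ideal p1 x)
  (hV2ker : forall x : R2, V2 x = 0 <-> principal_ideal p2 x).
Local Notation R := (pullback V1 V2).

Lemma pbE (r : R) : V1 (pbval r).1 = V2 (pbval r).2.
Proof. by apply/eqP; exact: (pbvalP r). Qed.

Definition mkpb (x1 : R1) (x2 : R2) (h : V1 x1 = V2 x2) : R :=
  @Pullback _ _ _ V1 V2 (x1, x2) (introT eqP h).

Lemma pb_inj (a b : R) : (pbval a).1 = (pbval b).1 -> (pbval a).2 = (pbval b).2 -> a = b.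
Proof.
move=> h1 h2; apply: val_inj => /=; move: h1 h2.
by case: (pbval a) => ? ?; case: (pbval b) => ? ? /= -> ->.
Qed.

Definition Pm (r : R) : Prop := V1 (pbval r).1 = 0.

Lemma unit1 (x : R1) : V1 x != 0 -> x \is a GRing.unit.
Proof.
move=> h; apply/negPn/negP => hn; have := proj1 (hP1 x) hn.
by move/(proj2 (hV1ker x)) => e; rewrite e eqxx in h.
Qed.
Lemma unit2 (x : R2) : V2 x != 0 -> x \is a GRing.unit.
Proof.
move=> h; apply/negPn/negP => hn; have := proj1 (hP2 x) hn.
by move/(proj2 (hV2ker x)) => e; rewrite e eqxx in h.
Qed.

Lemma Pm_inv (c : R) : ~ Pm c -> exists d : R, d * c = 1.
Proof.
rewrite /Pm => h.
have h1 : V1 (pbval c).1 != 0 by apply/eqP.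
have h2 : V2 (pbval c).2 != 0 by rewrite -pbE.
have u1 := unit1 h1; have u2 := unit2 h2.
have e : V1 ((pbval c).1)^-1 = V2 ((pbval c).2)^-1 by rewrite !rmorphV // pbE.
exists (mkpb e); apply: pb_inj => /=; exact: mulVr.
Qed.

Lemma Pm_mul (r s : R) : Pm s -> Pm (r * s).
Proof. by rewrite /Pm /= rmorphM => ->; rewrite mulr0. Qed.
Lemma Pm_mulr (r s : R) : Pm r -> Pm (r * s).
Proof. by rewrite /Pm /= rmorphM => ->; rewrite mul0r. Qed.
Lemma Pm_add (r s : R) : Pm r -> Pm s -> Pm (r + s).
Proof. by rewrite /Pm /= rmorphD => -> ->; rewrite addr0. Qed.
Lemma Pm0 : Pm 0.
Proof. by rewrite /Pm /= rmorph0. Qed.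
Lemma Pm1 : ~ Pm 1.
Proof. by rewrite /Pm /= rmorph1 => /eqP; rewrite oner_eq0. Qed.

Lemma P1_0_Pm r : P1_0 r -> Pm r.
Proof. by case. Qed.
Lemma O_P2_Pm r : O_P2 r -> Pm r.
Proof. by case=> h _; rewrite /Pm h rmorph0. Qed.
Lemma P1_0_mul (c r : R) : P1_0 r -> P1_0 (c * r).
Proof. by case=> h1 h2; split => /=; rewrite ?h1 ?mulr0 // rmorphM h2 mulr0. Qed.
Lemma O_P2_mul (c r : R) : O_P2 r -> O_P2 (c * r).
Proof. by case=> h1 h2; split => /=; rewrite ?h1 ?mulr0 // rmorphM h2 mulr0. Qed.

Lemma Pm_split r : Pm r -> exists r1 r2, [/\ P1_0 r1, O_P2 r2 & r = r1 + r2].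
Proof.
rewrite /Pm => h.
have e1 : V1 (pbval r).1 = V2 0 by rewrite h rmorph0.
have e2 : V1 0 = V2 (pbval r).2 by rewrite rmorph0 -pbE h.
exists (mkpb e1), (mkpb e2); split.
- by split.
- by split => //=; rewrite -pbE.
- by apply: pb_inj => /=; rewrite ?addr0 ?add0r.
Qed.

Lemma local_ideal I : is_ideal I -> ~ I 1 -> forall x, I x -> Pm x.
Proof.
case=> _ _ hM hn x hx; apply: NNPP => h; have [d hd] := Pm_inv h.
by apply: hn; rewrite -hd; apply: hM.
Qed.

Lemma pbX (y : R) n : pbval (y ^+ n) = ((pbval y).1 ^+ n, (pbval y).2 ^+ n).
Proof.
elim: n => [|n IH]; first by rewrite !expr0.
by rewrite !exprS /= IH.
Qed.


Lemma dvr1 (x y : R1) : x != 0 -> V1 y = 0 -> exists n t, y ^+ n = t * x.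
Proof.
case: hR1 => hpid _ hnf xn0 hy; apply: (dvr_pow hpid hP1 hnf xn0).
by apply/(proj2 (hP1 y)); apply/hV1ker.
Qed.
Lemma dvr2 (x y : R2) : x != 0 -> V2 y = 0 -> exists n t, y ^+ n = t * x.
Proof.
case: hR2 => hpid _ hnf xn0 hy; apply: (dvr_pow hpid hP2 hnf xn0).
by apply/(proj2 (hP2 y)); apply/hV2ker.
Qed.

Section TwoAP.
Variable I : R -> Prop.
Hypothesis hI : is_ideal I.

Lemma rad_of (y x r : R) n : I x -> y ^+ n = r * x -> Defs.rad I y.
Proof. by case: hI => _ _ hM hx e; exists n; rewrite e; apply: hM. Qed.

Lemma claim12 x y : I x -> (pbval x).1 != 0 -> (pbval x).2 != 0 -> Pm y -> Defs.rad I y.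
Proof.
move=> hx hx1 hx2 hy.
have hy2 : V2 (pbval y).2 = 0 by rewrite -pbE.
have [n [t1 e1]] := dvr1 hx1 hy.
have [m [t2 e2]] := dvr2 hx2 hy2.
have e : V1 ((pbval y).1 ^+ m.+1 * t1) = V2 ((pbval y).2 ^+ n.+1 * t2).
  by rewrite !rmorphM !rmorphXn hy hy2 !exprS !mul0r.
apply: (@rad_of y x (mkpb e) (n + m).+1 hx); apply: pb_inj; rewrite /= pbX /=.
- by rewrite -mulrA -e1 -exprD addSn addnC.
- by rewrite -mulrA -e2 -exprD addSn.
Qed.

Lemma claim1 x y : I x -> (pbval x).1 != 0 -> (pbval x).2 = 0 -> (pbval y).2 = 0 -> Defs.rad I y.
Proof.
move=> hx hx1 hx2 hy2.
have hy : V1 (pbval y).1 = 0 by rewrite pbE hy2 rmorph0.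
have [n [t e1]] := dvr1 hx1 hy.
have [s hs] := hV2surj (V1 ((pbval y).1 * t)).
apply: (@rad_of y x (mkpb (esym hs)) n.+1 hx); apply: pb_inj; rewrite /= pbX /=.
- by rewrite exprS e1 mulrA.
- by rewrite hy2 hx2 exprS mul0r mulr0.
Qed.

Lemma claim2 x y : I x -> (pbval x).2 != 0 -> (pbval x).1 = 0 -> (pbval y).1 = 0 -> Defs.rad I y.
Proof.
move=> hx hx2 hx1 hy1.
have hy : V2 (pbval y).2 = 0 by rewrite -pbE hy1 rmorph0.
have [n [t e2]] := dvr2 hx2 hy.
have [s hs] := hV1surj (V2 ((pbval y).2 * t)).
apply: (@rad_of y x (mkpb hs) n.+1 hx); apply: pb_inj; rewrite /= pbX /=.
- by rewrite hy1 hx1 exprS mul0r mulr0.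
- by rewrite exprS e2 mulrA.
Qed.

End TwoAP.

Lemma all_2AP (I : R -> Prop) : Defs.proper_ideal I -> two_absorbing_primary I.
Proof.
move=> [hI hn]; split => //; move=> a b c habc.
have hI' := hI; case: hI' => I0 IA IM.
have radI z : I z -> Defs.rad I z by move=> h; exists 1%N; rewrite expr1.
case: (classic (Pm a)) => ha; last first.
  have [d hd] := Pm_inv ha; apply: Or33; apply: radI.
  have -> : b * c = d * (a * b * c).
    have -> : d * (a * b * c) = (b * c) * (d * a) by ring.
    by rewrite hd mulr1.
  exact: IM.
case: (classic (Pm b)) => hb; last first.
  have [d hd] := Pm_inv hb; apply: Or32; apply: radI.
  have -> : a * c = d * (a * b * c).
    have -> : d * (a * b * c) = (a * c) * (d * b) by ring.
    by rewrite hd mulr1.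
  exact: IM.
case: (classic (Pm c)) => hc; last first.
  have [d hd] := Pm_inv hc; apply: Or31.
  have -> : a * b = d * (a * b * c).
    have -> : d * (a * b * c) = (a * b) * (d * c) by ring.
    by rewrite hd mulr1.
  exact: IM.
have z1 : (forall x, I x -> (pbval x).1 = 0) \/ exists x, I x /\ (pbval x).1 != 0.
  case: (classic (exists x, I x /\ (pbval x).1 != 0)) => h; [by right|left].
  move=> x hx; apply/eqP; apply: negbNE; apply/negP => hne; apply: h; by exists x.
have z2 : (forall x, I x -> (pbval x).2 = 0) \/ exists x, I x /\ (pbval x).2 != 0.
  case: (classic (exists x, I x /\ (pbval x).2 != 0)) => h; [by right|left].
  move=> x hx; apply/eqP; apply: negbNE; apply/negP => hne; apply: h; by exists x.
have Pac : Pm (a * c) by apply: Pm_mulr.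
case: z1 => [A1|[x [hx hx1]]]; case: z2 => [A2|[x' [hx' hx2]]].
-
  have z1 := A1 _ habc; have z2 := A2 _ habc; rewrite /= in z1 z2.
  have hab : (pbval a).1 * (pbval b).1 = 0 -> (pbval a).2 * (pbval b).2 = 0 -> [\/ I (a * b), Defs.rad I (a * c) | Defs.rad I (b * c)].
    by move=> e1 e2; apply: Or31; have -> : a * b = 0 by apply: pb_inj. 
  have hac : (pbval a).1 * (pbval c).1 = 0 -> (pbval a).2 * (pbval c).2 = 0 -> [\/ I (a * b), Defs.rad I (a * c) | Defs.rad I (b * c)].
    by move=> e1 e2; apply: Or32; apply: radI; have -> : a * c = 0 by apply: pb_inj. 
  have hbc : (pbval b).1 * (pbval c).1 = 0 -> (pbval b).2 * (pbval c).2 = 0 -> [\/ I (a * b), Defs.rad I (a * c) | Defs.rad I (b * c)].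
    by move=> e1 e2; apply: Or33; apply: radI; have -> : b * c = 0 by apply: pb_inj. 
  move: z1 z2 => /eqP; rewrite !mulf_eq0 => /orP[/orP[]|] /eqP h1 /eqP;
  rewrite !mulf_eq0 => /orP[/orP[]|] /eqP h2;
  solve [apply: hab; by rewrite ?h1 ?h2 ?mulr0 ?mul0r
        | apply: hac; by rewrite ?h1 ?h2 ?mulr0 ?mul0r
        | apply: hbc; by rewrite ?h1 ?h2 ?mulr0 ?mul0r].
-
  have z1 := A1 _ habc; rewrite /= in z1.
  have hx1 := A1 _ hx'.
  move: z1 => /eqP; rewrite !mulf_eq0 => /orP[/orP[]|] /eqP h1.
  + by apply: Or32; apply: (claim2 hI hx' hx2 hx1); rewrite /= h1 mul0r.
  + by apply: Or33; apply: (claim2 hI hx' hx2 hx1); rewrite /= h1 mul0r.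
  + by apply: Or32; apply: (claim2 hI hx' hx2 hx1); rewrite /= h1 mulr0.
-
  have z2 := A2 _ habc; rewrite /= in z2.
  have hx2 := A2 _ hx.
  move: z2 => /eqP; rewrite !mulf_eq0 => /orP[/orP[]|] /eqP h2.
  + by apply: Or32; apply: (claim1 hI hx hx1 hx2); rewrite /= h2 mul0r.
  + by apply: Or33; apply: (claim1 hI hx hx1 hx2); rewrite /= h2 mul0r.
  + by apply: Or32; apply: (claim1 hI hx hx1 hx2); rewrite /= h2 mulr0.
-
  apply: Or32.
  case: (eqVneq (pbval x).2 0) => e2; last exact: (claim12 hI hx hx1 e2 Pac).
  case: (eqVneq (pbval x').1 0) => e1; last exact: (claim12 hI hx' e1 hx2 Pac).
  apply: (claim12 hI (IA _ _ hx hx')) => //=; rewrite ?e1 ?e2 ?addr0 ?add0r //.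
Qed.


Section Mod.

Definition cyclic (X : lmodType R) := exists m0 : X, forall m, exists r : R, m = r *: m0.

Lemma im_single (X : lmodType R) (I : R -> Prop) a (x : X) : I a -> ideal_mul I (a *: x).
Proof. by move=> ha; exists 1%N, (fun _ => a), (fun _ => x); split => //; rewrite big_ord1. Qed.

Lemma im_addterm (X : lmodType R) (I : R -> Prop) (y x : X) a :
  ideal_mul I y -> I a -> ideal_mul I (y + a *: x).
Proof.
case=> n [r [z [hr ->]]] ha.
exists n.+1, (fun k => if unlift ord0 k is Some j then r j else a),
  (fun k => if unlift ord0 k is Some j then z j else x); split.
  by move=> k; case: (unlift _ _).
rewrite big_ord_recl /= unlift_none addrC; congr (_ + _).
by apply: eq_bigr => j _; rewrite liftK.
Qed.

Lemma im_mono (X : lmodType R) (I J : R -> Prop) (m : X) :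
  (forall r, I r -> J r) -> ideal_mul I m -> ideal_mul J m.
Proof. by move=> hIJ [n [r [z [hr ->]]]]; exists n, r, z; split => // k; apply: hIJ. Qed.

Lemma im_lin (X Y : lmodType R) (f : {linear X -> Y}) (I : R -> Prop) m :
  ideal_mul I m -> ideal_mul I (f m).
Proof.
case=> n [r [z [hr ->]]]; exists n, r, (fun k => f (z k)); split => //.
by rewrite linear_sum; apply: eq_bigr => k _; rewrite linearZ.
Qed.

Lemma im_ind (X : lmodType R) (I : R -> Prop) (P : X -> Prop) m :
  P 0 -> (forall u v, P u -> P v -> P (u + v)) -> (forall a x, I a -> P (a *: x)) ->
  ideal_mul I m -> P m.
Proof.
move=> P0 PD PZ [n [r [z [hr ->]]]].
by apply: (big_ind P) => // k _; apply: PZ.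
Qed.

Lemma colon_ideal (X : lmodType R) (N : X -> Prop) : is_submodule N -> is_ideal (colon N).
Proof.
case=> N0 ND NZ; split.
- by move=> m; rewrite scale0r.
- by move=> x y hx hy m; rewrite scalerDl; apply: ND.
- by move=> r x hx m; rewrite -scalerA; apply: NZ.
Qed.

Lemma cyclic_pap (X : lmodType R) : cyclic X -> pap_multiplication X.
Proof.
move=> [m0 hm0] N [[hsub _] _]; have hsub' := hsub; case: hsub' => N0 ND NZ.
exists (colon N); split; first exact: colon_ideal.
move=> m; split.
- move=> hm; have [r er] := hm0 m; rewrite er; apply: im_single => m'.
  have [c ->] := hm0 m'; rewrite scalerA mulrC -scalerA -er; exact: NZ.
- by apply: im_ind => // a x ha; apply: ha.
Qed.

Lemma pap_cyclic (X : lmodType R) : pap_multiplication X -> cyclic X.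
Proof.
move=> hpap; case: (classic (cyclic X)) => // hnc.
have key : forall m : X, exists I : R -> Prop, [/\ is_ideal I, ~ I 1 &
    forall z, (exists r, z = r *: m) <-> ideal_mul I z].
  move=> m; pose N := fun z : X => exists r : R, z = r *: m.
  have hsub : is_submodule N.
    split.
    - by exists 0; rewrite scale0r.
    - by move=> x y [r ->] [s ->]; exists (r + s); rewrite scalerDl.
    - by move=> c x [r ->]; exists (c * r); rewrite scalerA.
  have hnall : ~ (forall z, N z) by move=> h; apply: hnc; exists m.
  have hprop : exists z, ~ N z.
    by apply: NNPP => h; apply: hnall => z; apply: NNPP => hz; apply: h; exists z.
  have hcol : two_absorbing_primary (colon N).
    apply: all_2AP; split; first exact: colon_ideal.
    by move=> h1; apply: hnall => z; have := h1 z; rewrite scale1r.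
  have [I [hI hIe]] := hpap N (conj (conj hsub hprop) hcol).
  exists I; split => //.
  by move=> h1; apply: hnall => z; apply/hIe; rewrite -[z]scale1r; apply: im_single.
have allP : forall m : X, ideal_mul Pm m.
  move=> m; have [I [hI hI1 hIe]] := key m.
  apply: (im_mono (local_ideal hI hI1)); apply/hIe; exists 1; by rewrite scale1r.
have zero : forall m : X, m = 0.
  move=> m; have [I [hI hI1 hIe]] := key m.
  have hm : ideal_mul I m by apply/hIe; exists 1; rewrite scale1r.
  pose Qp := fun z : X => exists q, Pm q /\ z = q *: m.
  have Q0 : Qp 0 by exists 0; split; [exact: Pm0 | rewrite scale0r].
  have QD : forall u v, Qp u -> Qp v -> Qp (u + v).
    move=> u v [q1 [h1 ->]] [q2 [h2 ->]]; exists (q1 + q2); split; first exact: Pm_add.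
    by rewrite scalerDl.
  have [q [hq eq]] : Qp m.
    apply: (im_ind Q0 QD _ hm) => a x ha.
    apply: (@im_ind X Pm (fun z => Qp (a *: z))) (allP x).
    - by rewrite scaler0.
    - by move=> u v hu hv; rewrite scalerDr; apply: QD.
    - move=> s y hs; rewrite scalerA mulrC -scalerA.
      have [c ec] : exists c, a *: y = c *: m by apply/hIe; apply: im_single.
      by rewrite ec scalerA; exists (s * c); split => //; apply: Pm_mulr.
  have hn : ~ Pm (1 - q).
    by move=> h; apply: Pm1; have := Pm_add h hq; rewrite subrK.
  have [d hd] := Pm_inv hn.
  have e0 : (1 - q) *: m = 0 by rewrite scalerBl scale1r -eq subrr.
  by rewrite -[m]scale1r -hd -scalerA e0 scaler0.
by exfalso; apply: hnc; exists 0 => m; exists 0; rewrite scale0r; apply: zero.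
Qed.

End Mod.

Local Notation P1n := (@P1_0 _ _ _ V1 V2).
Local Notation P2n := (@O_P2 _ _ _ V1 V2).
Section Rep.
Variables (S M : lmodType R) (phi : {linear S -> M}).
Hypothesis hrep : separated_representation phi.

Section G.
Variables (L : S -> Prop) (hL : is_submodule L) (hK : forall x, L x -> phi x = 0).
Definition gq : QT hL -> M := let _ := hK in fun q => phi (sval q).

Lemma gq_pi x : gq (qpi hL x) = phi x.
Proof.
rewrite /gq /=.
have hx : L (x - qrep L x) by apply: qrep_spec; case: hL.
by have := hK hx; rewrite linearB /= => /eqP; rewrite subr_eq0 => /eqP <-.
Qed.

Lemma gq_linear : linear gq.
Proof.
move=> a; elim/(@qind _ _ _ hL) => x; elim/(@qind _ _ _ hL) => y.
by rewrite -linearP !gq_pi linearP.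
Qed.

HB.instance Definition _ := GRing.isLinear.Build R (QT hL) M *:%R gq gq_linear.
End G.


Lemma im_lift (L : S -> Prop) (hL : is_submodule L) (I : R -> Prop) (m : QT hL) :
  ideal_mul I m -> exists y, ideal_mul I y /\ m = qpi hL y.
Proof.
case=> n [r [z [hr ->]]]; exists (\sum_(k < n) r k *: sval (z k)); split.
  by exists n, r, (fun k => sval (z k)).
by rewrite linear_sum; apply: eq_bigr => k _; rewrite linearZ /= qpiK.
Qed.

Lemma quot_zero (L : S -> Prop) : is_submodule L -> (forall x, L x -> phi x = 0) ->
  (forall y1 y2, ideal_mul P1n y1 -> ideal_mul P2n y2 -> L (y1 - y2) -> L y1) ->
  forall x, L x -> x = 0.
Proof.
move=> hL hK hC x hx; case: hrep => hsep hsurj hmin.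
have hsepQ : separated (QT hL).
  move=> m /im_lift [y1 [h1 ->]] /im_lift [y2 [h2 e]].
  have hy : L (y1 - y2) by apply/(@qpi_eq _ _ _ hL).
  have := hC _ _ h1 h2 hy => hy1.
  have -> : qpi hL y1 = qpi hL 0 by apply/(@qpi_eq _ _ _ hL); rewrite subr0.
  by rewrite linear0.
have hinj := hmin (QT hL) (qpi hL) (gq hK) hsepQ (fun s => esym (gq_pi hL hK s)).
apply: hinj; rewrite linear0; apply/(@qpi_eq _ _ _ hL); by rewrite subr0.
Qed.

Lemma im_zero (X : lmodType R) (I : R -> Prop) : I 0 -> ideal_mul I (0 : X).
Proof. by move=> h; rewrite -(scale0r (0 : X)); apply: im_single. Qed.

Lemma im_scale (X : lmodType R) (I : R -> Prop) (d : R) (y : X) :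
  (forall a, I a -> I (d * a)) -> ideal_mul I y -> ideal_mul I (d *: y).
Proof.
move=> hd [n [r [z [hr ->]]]]; exists n, (fun k => d * r k), z; split.
  by move=> k; apply: hd.
by rewrite scaler_sumr; apply: eq_bigr => k _; rewrite scalerA.
Qed.

Lemma cyc_submod (X : lmodType R) (v : X) : is_submodule (fun z => exists c : R, z = c *: v).
Proof.
split.
- by exists 0; rewrite scale0r.
- by move=> x y [r ->] [s ->]; exists (r + s); rewrite scalerDl.
- by move=> c x [r ->]; exists (c * r); rewrite scalerA.
Qed.

Lemma K_P1 (k : S) (r : R) : phi k = 0 -> P1_0 r -> r *: k = 0.
Proof.
move=> hk hr; have hsep := (let: And3 a _ _ := hrep in a).
apply: (quot_zero (cyc_submod (r *: k))); last by exists 1; rewrite scale1r.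
- by move=> x [c ->]; rewrite !linearZ /= hk !scaler0.
- move=> y1 y2 h1 h2 [c hc].
  have e2 : y2 = y1 + (- (c * r)) *: k by rewrite scaleNr -scalerA -hc opprB addrC subrK.
  have y20 : y2 = 0.
    apply: hsep => //; rewrite e2; apply: im_addterm => //.
    by rewrite -mulNr; apply: P1_0_mul.
  by exists c; rewrite -hc y20 subr0.
Qed.

Lemma K_P2 (k : S) (r : R) : phi k = 0 -> O_P2 r -> r *: k = 0.
Proof.
move=> hk hr; have hsep := (let: And3 a _ _ := hrep in a).
apply: (quot_zero (cyc_submod (r *: k))); last by exists 1; rewrite scale1r.
- by move=> x [c ->]; rewrite !linearZ /= hk !scaler0.
- move=> y1 y2 h1 h2 [c hc].
  have e1 : y1 = y2 + (c * r) *: k by rewrite -scalerA -hc addrC subrK.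
  have y10 : y1 = 0.
    apply: hsep => //; rewrite e1; apply: im_addterm => //.
    by apply: O_P2_mul.
  by exists 0; rewrite y10 scale0r.
Qed.

Lemma K_Pm (k : S) (r : R) : phi k = 0 -> Pm r -> r *: k = 0.
Proof.
move=> hk /Pm_split [r1 [r2 [h1 h2 ->]]].
by rewrite scalerDl (K_P1 hk h1) (K_P2 hk h2) addr0.
Qed.

Lemma K_sub (k : S) : phi k = 0 ->
  exists y1 y2, [/\ ideal_mul P1n y1, ideal_mul P2n y2 & k = y1 - y2].
Proof.
move=> hk; have hsep := (let: And3 a _ _ := hrep in a).
apply: NNPP => H.
have k0 : k = 0.
  apply: (quot_zero (cyc_submod k)); last by exists 1; rewrite scale1r.
  - by move=> x [c ->]; rewrite linearZ /= hk scaler0.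
  - move=> y1 y2 h1 h2 [c hc].
    case: (classic (Pm c)) => hpc.
      have e : y1 = y2 by apply/eqP; rewrite -subr_eq0 hc (K_Pm hk hpc).
      have y10 : y1 = 0 by apply: hsep => //; rewrite e.
      by exists 0; rewrite y10 scale0r.
    exfalso; apply: H; have [d hd] := Pm_inv hpc.
    exists (d *: y1), (d *: y2); split.
    + by apply: im_scale h1 => a; apply: P1_0_mul.
    + by apply: im_scale h2 => a; apply: O_P2_mul.
    + by rewrite -scalerBr hc scalerA hd scale1r.
apply: H; exists 0, 0; split.
- by apply: im_zero; split; rewrite /= ?rmorph0.
- by apply: im_zero; split; rewrite /= ?rmorph0.
- by rewrite k0 subr0.
Qed.

Lemma cyc_S : cyclic M -> cyclic S.
Proof.
move=> [m0 hm0]; have hsurj := (let: And3 _ a _ := hrep in a).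
have [s0 hs0] := hsurj m0.
have inR : forall (I : R -> Prop) y, (forall a, I a -> Pm a) -> ideal_mul I y -> exists c, y = c *: s0.
  move=> I y hIP; apply: (@im_ind S I (fun z => exists c, z = c *: s0)).
  - by exists 0; rewrite scale0r.
  - by move=> u v [c1 ->] [c2 ->]; exists (c1 + c2); rewrite scalerDl.
  - move=> a x ha; have [c' hc'] := hm0 (phi x).
    have hk : phi (x - c' *: s0) = 0 by rewrite linearB linearZ /= hs0 -hc' subrr.
    have := K_Pm hk (hIP _ ha); rewrite scalerBr scalerA => /eqP; rewrite subr_eq0 => /eqP ->.
    by exists (a * c').
exists s0 => s; have [r hr] := hm0 (phi s).
have hk : phi (s - r *: s0) = 0 by rewrite linearB linearZ /= hs0 -hr subrr.
have [y1 [y2 [h1 h2 e]]] := K_sub hk.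
have [c1 e1] := inR _ _ (@P1_0_Pm) h1.
have [c2 e2] := inR _ _ (@O_P2_Pm) h2.
rewrite e1 e2 -scalerBl in e.
by exists (c1 - c2 + r); rewrite scalerDl -e subrK.
Qed.

Lemma cyc_M : cyclic S -> cyclic M.
Proof.
move=> [s0 hs0]; have hsurj := (let: And3 _ a _ := hrep in a).
exists (phi s0) => m; have [s <-] := hsurj m; have [r ->] := hs0 s.
by exists r; rewrite linearZ.
Qed.

Lemma main_equiv : pap_multiplication M <-> pap_multiplication S.
Proof.
split => h.
- by apply: cyclic_pap; apply: cyc_S; apply: pap_cyclic.
- by apply: cyclic_pap; apply: cyc_M; apply: pap_cyclic.
Qed.
End Rep.

End Ring.


Unset Implicit Arguments.
Theorem theorem4p2
  (R1 R2 : idomainType) (F : fieldType)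
  (p1 : R1) (p2 : R2)
  (V1 : {rmorphism R1 -> F}) (V2 : {rmorphism R2 -> F})
  (hR1 : is_DVR R1) (hR2 : is_DVR R2)
  (hP1 : forall x : R1, x \isn't a GRing.unit <-> principal_ideal p1 x)
  (hP2 : forall x : R2, x \isn't a GRing.unit <-> principal_ideal p2 x)
  (hV1surj : forall c : F, exists r : R1, V1 r = c)
  (hV2surj : forall c : F, exists r : R2, V2 r = c)
  (hV1ker : forall x : R1, V1 x = 0 <-> principal_ideal p1 x)
  (hV2ker : forall x : R2, V2 x = 0 <-> principal_ideal p2 x)
  (M S : lmodType (pullback V1 V2)) (phi : {linear S -> M})
  (hMns : ~ separated M)
  (hrep : separated_representation phi) :
  pap_multiplication M <-> pap_multiplication S.
Proof.
exact: (main_equiv hR1 hR2 hP1 hP2 hV1surj hV2surj hV1ker hV2ker hrep).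
Qed.
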